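(* Let $\mathcal{Q}$ be a poset and let $\mathfrak X$ be an algebra on $\mathcal{Q}$ such that the category $\mathrm{Vect}^{\mathcal{Q}}_{\mathfrak X}$ of finitely $\mathfrak X$-encoded persistence modules is a full abelian subcategory of $\mathrm{Vect}^{\mathcal{Q}}$. Let $\mathfrak X_{\mathrm{Up}}$ be the algebra on $\mathcal{Q}$ generated by the upsets of $\mathcal{Q}$ that belong to $\mathfrak X$. Then the map \[ \nu \longmapsto \Big( M \mapsto \int_{\mathcal{Q}} \dim(M)\, d\nu \Big) \] from the set of contents on $\mathfrak X_{\mathrm{Up}}$ to the class of additive amplitudes on $\mathrm{Vect}^{\mathcal{Q}}_{\mathfrak X}$ is a bijection. In other words, every additive amplitude on $\mathrm{Vect}^{\mathcal{Q}}_{\mathfrak X}$ is given by integrating the Hilbert function $q\mapsto \dim M(q)$ against a unique content on $\mathfrak X_{\mathrm{Up}}$.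
   Context: $\mathrm{Vect}$ is the category of finite-dimensional vector spaces over a fixed field $\mathbb F$; a persistence module over a poset $\mathcal{Q}$ is a functor $\mathcal{Q}\to\mathrm{Vect}$ ($\mathcal{Q}$ viewed as a category). An algebra on a set is a family of subsets containing $\emptyset$ and closed under complements and finite unions. An upset of $\mathcal{Q}$ is a subset $U$ with $u\in U, u\le q\Rightarrow q\in U$; a downset is defined dually; an interval is an intersection of an upset and a downset. A finite encoding of $M\in\mathrm{Vect}^{\mathcal{Q}}$ consists of an order-preserving map $e\colon\mathcal{Q}\to\mathcal{P}$ to a finite poset $\mathcal{P}$, a module $M'\in\mathrm{Vect}^{\mathcal{P}}$ and an isomorphism $M\cong e^*M'=M'\circ e$; it is an $\mathfrak X$-encoding if every fiber $e^{-1}(p)$ belongs to $\mathfrak X$. $M$ is finitely $\mathfrak X$-encoded if it admits an $\mathfrak X$-encoding; $\mathrm{Vect}^{\mathcal{Q}}_{\mathfrak X}$ is the full subcategory of such modules. For an abelian category $\mathcal{A}$, an amplitude is a function $\alpha\colon\operatorname{ob}\mathcal{A}\to[0,\infty]$ with $\alpha(0)=0$ such that for every short exact sequence $0\to A\to B\to C\to 0$ one has $\alpha(A)\le\alpha(B)$, $\alpha(C)\le\alpha(B)$ and $\alpha(B)\le\alpha(A)+\alpha(C)$; it is additive if always $\alpha(B)=\alpha(A)+\alpha(C)$. A content on an algebra $\mathfrak A$ is a function $\nu\colon\mathfrak A\to[0,\infty]$ with $\nu(\emptyset)=0$ and $\nu(X\cup Y)=\nu(X)+\nu(Y)$ for disjoint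 $X,Y\in\mathfrak A$. For $M$ in $\mathrm{Vect}^{\mathcal{Q}}_{\mathfrak X}$ the Hilbert function $\dim(M)\colon q\mapsto\dim M(q)$ takes finitely many values with level sets in $\mathfrak X_{\mathrm{Up}}$, and the integral of such a finitely-valued function $f=\sum_i\lambda_i 1_{X_i}$ is defined as $\int f\,d\nu=\sum_i\lambda_i\nu(X_i)$. *)

(* Defs.v *)
From HB Require Import structures.
From mathcomp Require Import all_boot all_order all_algebra.
From mathcomp Require Import boolp classical_sets reals constructive_ereal.

Set Implicit Arguments.
Unset Strict Implicit.
Unset Printing Implicit Defensive.

Import Order.TTheory GRing.Theory Num.Theory.
Local Open Scope classical_set_scope.
Local Open Scope ring_scope.

Section SetAlgebras.
Context (T : Type).

Definition is_algebra (X : set (set T)) : Prop :=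
  [/\ X set0,
      (forall A, X A -> X (~` A)) &
      (forall A B, X A -> X B -> X (A `|` B))].

Definition gen_algebra (G : set (set T)) : set (set T) :=
  fun A => forall Y : set (set T), is_algebra Y -> G `<=` Y -> Y A.

End SetAlgebras.

Definition is_upset (d : Order.disp_t) (Q : porderType d) (U : set Q) : Prop :=
  forall u q : Q, U u -> (u <= q)%O -> U q.

Section Contents.
Context (T : Type) (R : realType).
Local Open Scope ereal_scope.

Definition content (A : set (set T)) (nu : set T -> \bar R) : Prop :=
  [/\ nu set0 = 0,
      (forall X, A X -> 0 <= nu X) &
      (forall X Y, A X -> A Y -> X `&` Y = set0 -> nu (X `|` Y) = nu X + nu Y)].

Definition hbound (f : T -> nat) : nat :=
  match pselect (exists N : nat, forall q, (f q < N)%N) with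
  | left h => proj1_sig (cid h)
  | right _ => 0%N
  end.

(* integral of a finitely-valued function f = sum_n n * 1_{f = n}:
   int f dnu = sum_n n * nu (f^{-1}(n)) *)
Definition nat_integral (nu : set T -> \bar R) (f : T -> nat) : \bar R :=
  \sum_(n < hbound f) ((n%:R)%:E * nu (f @^-1` [set (n : nat)])).

End Contents.

(* Persistence modules Q -> Vect (finite-dim F-vector spaces, modelled *)
(* by F^n with linear maps as matrices acting on row vectors)          *)
Section PMod.
Context (F : fieldType) (d : Order.disp_t) (Q : porderType d).

Record pmod := PMod {
  pdim : Q -> nat;
  pmap : forall p q : Q, (p <= q)%O -> 'M[F]_(pdim p, pdim q);
  pmap_id : forall p (h : (p <= p)%O), pmap h = 1%:M;
  pmap_comp : forall p q r (h1 : (p <= q)%O) (h2 : (q <= r)%O) (h3 : (p <= r)%O),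
      pmap h3 = pmap h1 *m pmap h2
}.

Definition is_nat (M N : pmod) (f : forall q, 'M[F]_(pdim M q, pdim N q)) : Prop :=
  forall p q (h : (p <= q)%O), pmap M h *m f q = f p *m pmap N h.

Definition pm_iso (M N : pmod) : Prop :=
  exists (f : forall q, 'M[F]_(pdim M q, pdim N q))
         (g : forall q, 'M[F]_(pdim N q, pdim M q)),
    [/\ is_nat f, is_nat g &
        forall q, f q *m g q = 1%:M /\ g q *m f q = 1%:M].

Definition ses (A B C : pmod)
    (f : forall q, 'M[F]_(pdim A q, pdim B q))
    (g : forall q, 'M[F]_(pdim B q, pdim C q)) : Prop :=
  [/\ is_nat f, is_nat g &
      forall q, [&& row_free (f q), row_full (g q) & (f q == kermx (g q))%MS]].

End PMod.

Section Pullback.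
Context (F : fieldType) (d d' : Order.disp_t) (Q : porderType d) (P : porderType d').
Context (M' : pmod F P) (e : Q -> P) (he : {homo e : x y / (x <= y)%O}).

Definition pb_map (p q : Q) (h : (p <= q)%O) : 'M[F]_(pdim M' (e p), pdim M' (e q)) :=
  pmap M' (he h).

Lemma pb_map_id p (h : (p <= p)%O) : pb_map h = 1%:M.
Proof. exact: pmap_id. Qed.

Lemma pb_map_comp p q r (h1 : (p <= q)%O) (h2 : (q <= r)%O) (h3 : (p <= r)%O) :
  pb_map h3 = pb_map h1 *m pb_map h2.
Proof. exact: pmap_comp. Qed.

Definition pullback : pmod F Q := PMod pb_map_id pb_map_comp.

End Pullback.

Definition encoded (F : fieldType) (d : Order.disp_t) (Q : porderType d)
    (X : set (set Q)) (M : pmod F Q) : Prop :=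
  exists (dP : Order.disp_t) (P : finPOrderType dP) (e : Q -> P)
         (he : {homo e : x y / (x <= y)%O}) (M' : pmod F P),
    (forall p : P, X (e @^-1` [set p])) /\ pm_iso M (pullback M' he).

(* Vect^Q_X is a full abelian subcategory of Vect^Q: closed under
   (pointwise, i.e. ambient) kernels and cokernels of its morphisms.
   (Zero and finite direct sums are always X-encoded for an algebra X.) *)
Definition abelian_sub (F : fieldType) (d : Order.disp_t) (Q : porderType d)
    (X : set (set Q)) : Prop :=
  (forall (M N K : pmod F Q) (f : forall q, 'M[F]_(pdim M q, pdim N q))
          (k : forall q, 'M[F]_(pdim K q, pdim M q)),
      encoded X M -> encoded X N -> is_nat f -> is_nat k ->
      (forall q, row_free (k q) && (k q == kermx (f q))%MS) -> encoded X K)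
  /\
  (forall (M N C : pmod F Q) (f : forall q, 'M[F]_(pdim M q, pdim N q))
          (c : forall q, 'M[F]_(pdim N q, pdim C q)),
      encoded X M -> encoded X N -> is_nat f -> is_nat c ->
      (forall q, row_full (c q) && (f q == kermx (c q))%MS) -> encoded X C).

Section Amplitudes.
Context (F : fieldType) (d : Order.disp_t) (Q : porderType d) (R : realType).
Local Open Scope ereal_scope.

Definition amplitude (Cat : pmod F Q -> Prop) (alpha : pmod F Q -> \bar R) : Prop :=
  [/\ (forall M, Cat M -> 0 <= alpha M),
      (forall Z, Cat Z -> (forall q, pdim Z q = 0%N) -> alpha Z = 0) &
      (forall (A B C : pmod F Q) f g, Cat A -> Cat B -> Cat C -> @ses F d Q A B C f g ->
         [/\ alpha A <= alpha B, alpha C <= alpha B & alpha B <= alpha A + alpha C])].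

Definition additive_amplitude (Cat : pmod F Q -> Prop) (alpha : pmod F Q -> \bar R) : Prop :=
  amplitude Cat alpha /\
  (forall (A B C : pmod F Q) f g, Cat A -> Cat B -> Cat C -> @ses F d Q A B C f g ->
     alpha B = alpha A + alpha C).

End Amplitudes.

(* Main.v *)
Require Import Defs.
From HB Require Import structures.
From mathcomp Require Import all_boot all_order all_algebra.
From mathcomp Require Import boolp classical_sets reals constructive_ereal.
From Stdlib Require List.

Set Implicit Arguments.
Unset Strict Implicit.
Unset Printing Implicit Defensive.
Import Order.TTheory GRing.Theory Num.Theory.
Module Part1.
Local Open Scope ring_scope.
Local Notation pmap := Defs.pmap.
Local Open Scope classical_set_scope.

Section Mx.
Variable F : fieldType.

Definition mxsel (a b : bool) m n (A : 'M[F]_(m,n)) :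
  'M[F]_(if a then m else 0, if b then n else 0)%N :=
  match a as a0, b as b0 return 'M[F]_(if a0 then m else 0, if b0 then n else 0)%N with
  | true, true => A | _, _ => 0 end.

Lemma mxselM (a b c : bool) m n k (A : 'M[F]_(m,n)) (B : 'M[F]_(n,k)) :
  (a -> c -> b) -> mxsel a b A *m mxsel b c B = mxsel a c (A *m B).
Proof.
case: a; case: b; case: c => //= H; try (by apply/matrixP => i j; case: i);
  try (by apply/matrixP => i j; case: j).
by have := H erefl erefl.
Qed.

Lemma mxsel_eq (a b : bool) m n (A B : 'M[F]_(m,n)) :
  (a -> b -> A = B) -> mxsel a b A = mxsel a b B.
Proof. by case: a; case: b => //= ->. Qed.

End Mx.

Section Exact.
Variable F : fieldType.

Definition exactp m n k (A : 'M[F]_(m,n)) (B : 'M[F]_(n,k)) : bool :=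
  [&& row_free A, row_full B & (A == kermx B)%MS].

Lemma rowfull_thin n (B : 'M[F]_(n,0)) : row_full B.
Proof. by rewrite /row_full; have := rank_leq_col B; rewrite leqn0. Qed.

Lemma rowfree_flat n (B : 'M[F]_(0,n)) : row_free B.
Proof. by rewrite /row_free; have := rank_leq_row B; rewrite leqn0. Qed.

Lemma exact_inj m n (A : 'M[F]_(m,n)) : row_free A -> row_full A ->
  exactp A (0 : 'M[F]_(n,0)).
Proof.
move=> h1 h2; rewrite /exactp h1 rowfull_thin /=.
rewrite kermx0 submx1 /=.
by rewrite kermx0 sub1mx.
Qed.

Lemma exact_surj m n (B : 'M[F]_(m,n)) : row_free B -> row_full B ->
  exactp (0 : 'M[F]_(0,m)) B.
Proof.
move=> h1 h2; rewrite /exactp h2 rowfree_flat /=.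
have /eqP -> : kermx B == 0 by rewrite kermx_eq0.
rewrite sub0mx /=.
by rewrite sub0mx.
Qed.

Lemma exact_00 : exactp (0 : 'M[F]_(0,0)) (0 : 'M[F]_(0,0)).
Proof.
rewrite /exactp rowfree_flat rowfull_thin /=.
by rewrite (flatmx0 (kermx _)); apply/eqmxP.
Qed.

Lemma exact_sel (a b c : bool) m n k (A : 'M[F]_(m,n)) (B : 'M[F]_(n,k)) :
  (~~ c -> ~~ a && ~~ b) -> (c -> exactp (mxsel a true A) (mxsel true b B)) ->
  exactp (mxsel a c A) (mxsel c b B).
Proof.
case: c => /=; first by move=> _ ->.
by case: a; case: b => //= H _; first [by have := H isT | exact: exact_00].
Qed.

End Exact.

Section Mods.
Variables (F : fieldType) (d : Order.disp_t) (Q : porderType d).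

Definition convexb (C : pred Q) : Prop :=
  forall p q r : Q, (p <= q)%O -> (q <= r)%O -> C p -> C r -> C q.

Section Rest.
Variables (M : pmod F Q) (C : pred Q) (hC : convexb C).

Definition rest_map (p q : Q) (h : (p <= q)%O) :=
  mxsel (C p) (C q) (pmap M h).

Lemma rest_id p (h : (p <= p)%O) : rest_map h = 1%:M.
Proof.
rewrite /rest_map pmap_id; case: (C p) => //.
by apply/matrixP => i j; case: i.
Qed.

Lemma rest_comp p q r (h1 : (p <= q)%O) (h2 : (q <= r)%O) (h3 : (p <= r)%O) :
  rest_map h3 = rest_map h1 *m rest_map h2.
Proof.
rewrite /rest_map mxselM; last by move=> Cp Cr; exact: (hC h1 h2).
by rewrite (pmap_comp _ h1 h2).
Qed.

Definition rest : pmod F Q := PMod rest_id rest_comp.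
End Rest.

Section Const.
Variable m : nat.
Definition kc_map (p q : Q) (h : (p <= q)%O) : 'M[F]_(m, m) := 1%:M.
Lemma kc_id p (h : (p <= p)%O) : kc_map h = 1%:M. Proof. by []. Qed.
Lemma kc_comp p q r (h1 : (p <= q)%O) (h2 : (q <= r)%O) (h3 : (p <= r)%O) :
  kc_map h3 = kc_map h1 *m kc_map h2.
Proof. by rewrite /kc_map mul1mx. Qed.
Definition Kconst : pmod F Q := @PMod F d Q (fun _ => m) kc_map kc_id kc_comp.
End Const.

Definition KC (C : pred Q) (hC : convexb C) (m : nat) := rest (Kconst m) hC.

Lemma pm_iso_refl (M : pmod F Q) : pm_iso M M.
Proof.
exists (fun q => 1%:M), (fun q => 1%:M); split => [p q h|p q h|q].
- by rewrite mul1mx mulmx1.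
- by rewrite mul1mx mulmx1.
- by rewrite mul1mx.
Qed.

End Mods.

Section IsoLemmas.
Variables (F : fieldType) (d : Order.disp_t) (Q : porderType d).

Lemma inv_free_full m n (f : 'M[F]_(m,n)) (g : 'M[F]_(n,m)) :
  f *m g = 1%:M -> g *m f = 1%:M -> row_free f && row_full f.
Proof.
move=> fg gf; apply/andP; split.
- rewrite /row_free eqn_leq rank_leq_row /=.
  by have := mxrankM_maxl f g; rewrite fg mxrank1.
- rewrite /row_full eqn_leq rank_leq_col /=.
  by have := mxrankM_maxr g f; rewrite gf mxrank1.
Qed.

Lemma inv_dim m n (f : 'M[F]_(m,n)) (g : 'M[F]_(n,m)) :
  f *m g = 1%:M -> g *m f = 1%:M -> m = n.
Proof.
move=> fg gf; have /andP[h1 h2] := inv_free_full fg gf.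
by rewrite -(eqP h1) (eqP h2).
Qed.

Lemma conv0 : convexb (fun _ : Q => false).
Proof. by []. Qed.

Definition Zmod (M : pmod F Q) := rest M conv0.

Lemma encoded_Zmod (X : set (set Q)) (M : pmod F Q) : encoded X M -> encoded X (Zmod M).
Proof.
move=> [dP [P [e [he [M' [hX _]]]]]].
have c0 : convexb (fun _ : P => false) by [].
exists dP, P, e, he, (rest M' c0); split => //.
exists (fun q => 0), (fun q => 0); split => [p q h|p q h|q].
- by apply/matrixP => i j; case: i.
- by apply/matrixP => i j; case: i.
- by split; apply/matrixP => i j; case: i.
Qed.

End IsoLemmas.

Section Alpha.
Variables (F : fieldType) (d : Order.disp_t) (Q : porderType d) (R : realType).
Variables (X : set (set Q)) (alpha : pmod F Q -> \bar R).
Hypothesis hA : additive_amplitude (encoded X) alpha.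
Local Open Scope ereal_scope.

Lemma alpha_ge0 M : encoded X M -> 0 <= alpha M.
Proof. by case: hA => [[h _ _] _]; exact: h. Qed.

Lemma alpha_ses (A B C : pmod F Q) f g : encoded X A -> encoded X B -> encoded X C ->
  @ses F d Q A B C f g -> alpha B = alpha A + alpha C.
Proof. by case: hA => _ h; exact: h. Qed.

Lemma alpha_Zmod M : encoded X M -> alpha (Zmod M) = 0.
Proof.
move=> hM; case: hA => [[_ h _] _]; apply: h => //; exact: encoded_Zmod.
Qed.

Lemma alpha_iso_mx (A B : pmod F Q) (f : forall q, 'M[F]_(pdim A q, pdim B q)) :
  encoded X A -> encoded X B -> is_nat f ->
  (forall q, row_free (f q) && row_full (f q)) -> alpha A = alpha B.
Proof.
move=> eA eB nf inv.
have E := @alpha_ses A B (Zmod A) f (fun q => 0%R) eA eB (encoded_Zmod eA).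
rewrite E ?alpha_Zmod ?adde0 //; split => // [p q h|q].
- by rewrite mulmx0 mul0mx.
- by have /andP[h1 h2] := inv q; exact: exact_inj.
Qed.

Lemma alpha_iso (A B : pmod F Q) : encoded X A -> encoded X B -> pm_iso A B ->
  alpha A = alpha B.
Proof.
move=> eA eB [f [g [nf _ h]]]; apply: (alpha_iso_mx eA eB nf) => q.
by have [h1 h2] := h q; exact: inv_free_full h1 h2.
Qed.

End Alpha.

Section SesLemmas.
Variables (F : fieldType) (d : Order.disp_t) (P : porderType d).

Lemma unit_free_full n : row_free (1%:M : 'M[F]_n) && row_full (1%:M : 'M[F]_n).
Proof. by rewrite /row_free /row_full mxrank1 eqxx. Qed.

Lemma ses_rest (N1 N : pmod F P) (C1 C C2 : pred P)
  (h1 : convexb C1) (h : convexb C) (h2 : convexb C2)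
  (phi : forall r, 'M[F]_(pdim N1 r, pdim N r)) :
  (forall r, C1 r -> C r) -> (forall r, C2 r -> C r) ->
  (forall r, C r -> C1 r = ~~ C2 r) ->
  (forall p q, (p <= q)%O -> C1 p -> C q -> C1 q) ->
  (forall p q, (p <= q)%O -> C p -> C2 q -> C2 p) ->
  (forall r, C1 r -> row_free (phi r) && row_full (phi r)) ->
  (forall p q (hpq : (p <= q)%O), C1 p -> C1 q ->
      pmap N1 hpq *m phi q = phi p *m pmap N hpq) ->
  @ses F d P (rest N1 h1) (rest N h) (rest N h2)
    (fun r => mxsel (C1 r) (C r) (phi r)) (fun r => mxsel (C r) (C2 r) 1%:M).
Proof.
move=> s1 s2 part up1 dn2 inv nat1; split.
- move=> p q hpq /=; rewrite /rest_map mxselM; last first.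
    by move=> c1p cq; exact: up1 hpq c1p cq.
  rewrite mxselM; last by move=> c1p _; exact: s1.
  apply: mxsel_eq => c1p cq; apply: nat1 => //; exact: up1 hpq c1p cq.
- move=> p q hpq /=; rewrite /rest_map mxselM; last by move=> _ c2q; exact: s2.
  rewrite mxselM; last by move=> cp c2q; exact: dn2 hpq cp c2q.
  by apply: mxsel_eq => _ _; rewrite mulmx1 mul1mx.
- move=> r; apply: exact_sel.
    by case E: (C r) => //= _; apply/andP; split; apply/negP => H;
       [move: (s1 _ H) | move: (s2 _ H)]; rewrite E.
  move=> cr; have := part _ cr; case E1: (C1 r); case: (C2 r) => //= _.
    by have /andP[u1 u2] := inv r E1; exact: exact_inj.
  by have /andP[u1 u2] := unit_free_full (pdim N r); exact: exact_surj.
Qed.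

End SesLemmas.

Section KCSes.
Variables (F : fieldType) (d : Order.disp_t) (P : porderType d).

Definition f0 m : 'M[F]_(1, m.+1) := row_mx (1%:M : 'M_1) (0 : 'M_(1,m)).
Definition g0 m : 'M[F]_(m.+1, m) := col_mx (0 : 'M_(1,m)) (1%:M : 'M_m).

Lemma exact_f0g0 m : exactp (f0 m) (g0 m).
Proof.
have r1 : \rank (f0 m) = 1%N.
  by have H := rank_row_mx0 m (1%:M : 'M[F]_1); rewrite mxrank1 in H; exact H.
have r2 : \rank (g0 m) = m.
  by have H := rank_col_0mx 1 (1%:M : 'M[F]_m); rewrite mxrank1 in H; exact H.
rewrite /exactp /row_free /row_full r1 r2 !eqxx /=.
have sub : (f0 m <= kermx (g0 m))%MS.
  rewrite sub_kermx; apply/eqP.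
  have H := mul_row_col (1%:M : 'M[F]_1) (0 : 'M[F]_(1,m)) (0 : 'M[F]_(1,m)) (1%:M : 'M[F]_m).
  rewrite mulmx0 mul0mx addr0 in H; exact H.
rewrite -(eq_leqif (mxrank_leqif_eq sub)) mxrank_ker r1 r2.
by rewrite subSn // subnn.
Qed.

Lemma ses_KC (C : pred P) (h : convexb C) m :
  @ses F d P (@KC F d P C h 1) (@KC F d P C h m.+1) (@KC F d P C h m)
    (fun q => mxsel (C q) (C q) (f0 m)) (fun q => mxsel (C q) (C q) (g0 m)).
Proof.
split.
- move=> p q hpq /=; rewrite /rest_map !mxselM //.
  by apply: mxsel_eq => _ _; rewrite /kc_map mul1mx mulmx1.
- move=> p q hpq /=; rewrite /rest_map !mxselM //.
  by apply: mxsel_eq => _ _; rewrite /kc_map mul1mx mulmx1.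
- move=> q; apply: exact_sel; first by move/negbTE ->.
  by move=> ->; exact: exact_f0g0.
Qed.

End KCSes.

Section PullbackSes.
Variables (F : fieldType) (d d' : Order.disp_t) (Q : porderType d) (P : porderType d').
Variables (e : Q -> P) (he : {homo e : x y / (x <= y)%O}).

Lemma ses_pullback (A B C : pmod F P) f g : @ses F d' P A B C f g ->
  @ses F d Q (pullback A he) (pullback B he) (pullback C he)
     (fun q => f (e q)) (fun q => g (e q)).
Proof.
case=> nf ng ex; split => [p q hpq|p q hpq|q] /=; rewrite /pb_map //.
Qed.

Lemma encoded_pullback (X : set (set Q)) (P' : finPOrderType d') (e' : Q -> P')
  (he' : {homo e' : x y / (x <= y)%O}) (N : pmod F P') :
  (forall p, X (e' @^-1` [set p])) -> encoded X (pullback N he').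
Proof.
move=> hX; exists d', P', e', he', N; split => //; exact: pm_iso_refl.
Qed.

End PullbackSes.

Section FinPoset.
Variables (d : Order.disp_t) (P : finPOrderType d).

Lemma exists_max (T : {set P}) p0 : p0 \in T ->
  exists2 p, p \in T & forall r, r \in T -> (p <= r)%O -> r = p.
Proof.
move=> p0T.
pose down (p : P) : {set P} := finset (fun x => (x <= p)%O).
case: (@arg_maxnP P p0 (mem T) (fun p => #|down p|) p0T) => p pT pmax.
exists p => // r rT pr.
have := pmax r rT => cle.
have sub : down p \subset down r.
  by apply/fintype.subsetP => x; rewrite !inE => xp; exact: le_trans xp pr.
have : down p == down r by rewrite eqEcard sub.
move/eqP/setP/(_ r); rewrite !inE lexx => rp.
by apply/eqP; rewrite eq_le rp.
Qed.

Lemma conv_pred1 (p : P) : convexb (fun x : P => x == p).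
Proof.
move=> a b c ab bc /eqP ea /eqP ec; subst a c.
by apply/eqP/eqP; rewrite eq_le bc ab.
Qed.

End FinPoset.
Arguments conv_pred1 {d P} p.

Lemma pmod_eq (F : fieldType) (d : Order.disp_t) (Q : porderType d)
  (pd : Q -> nat) (pm : forall p q : Q, (p <= q)%O -> 'M[F]_(pd p, pd q)) i1 i2 c1 c2 :
  @PMod F d Q pd pm i1 c1 = @PMod F d Q pd pm i2 c2.
Proof. by rewrite (Prop_irrelevance i1 i2) (Prop_irrelevance c1 c2). Qed.

Lemma rest_predT (F : fieldType) (d : Order.disp_t) (Q : porderType d) (N : pmod F Q)
  (h : convexb (fun _ : Q => true)) : rest N h = N.
Proof. by case: N => pd pm i c; exact: pmod_eq. Qed.

Lemma rest_ext (F : fieldType) (d : Order.disp_t) (Q : porderType d) (N : pmod F Q)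
  (C1 C2 : pred Q) (h1 : convexb C1) (h2 : convexb C2) : C1 =1 C2 -> rest N h1 = rest N h2.
Proof.
move=> /funext E; subst C2; by rewrite (Prop_irrelevance h1 h2).
Qed.

Lemma pullback_KC (F : fieldType) (d d' : Order.disp_t) (Q : porderType d) (P : porderType d')
  (e : Q -> P) (he : {homo e : x y / (x <= y)%O}) (T : pred P) (hT : convexb T)
  (hTe : convexb (fun q => T (e q))) m :
  pullback (@KC F d' P T hT m) he = @KC F d Q (fun q => T (e q)) hTe m.
Proof. exact: pmod_eq. Qed.
Arguments pullback_KC {F d d' Q P e} he {T} hT {hTe m}.

Section CL.
Variables (F : fieldType) (dQ : Order.disp_t) (Q : porderType dQ) (R : realType).
Variables (X : set (set Q)) (alpha : pmod F Q -> \bar R).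
Hypothesis hA : additive_amplitude (encoded X) alpha.
Local Open Scope ereal_scope.

Definition cC (C : pred Q) : \bar R :=
  match pselect (convexb C) with
  | left h => alpha (@KC F dQ Q C h 1) | right _ => 0 end.

Lemma cC_eq (C : pred Q) (h : convexb C) : cC C = alpha (@KC F dQ Q C h 1).
Proof.
rewrite /cC; case: pselect => [h'|/(_ h)//].
by rewrite (Prop_irrelevance h' h).
Qed.

Lemma alpha_zero (M : pmod F Q) : encoded X M -> (forall q, pdim M q = 0%N) -> alpha M = 0.
Proof. by case: hA => [[_ h _] _]; exact: h. Qed.

Variables (dP : Order.disp_t) (P : finPOrderType dP) (e : Q -> P).
Variable (he : {homo e : x y / (x <= y)%O}).
Hypothesis hX : forall p, X (e @^-1` [set p]).

Definition fib (p : P) : pred Q := fun q => e q == p.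

Lemma fib_conv p : convexb (fib p).
Proof.
move=> a b c ab bc /eqP ea /eqP ec; rewrite /fib eq_le; apply/andP; split.
  by rewrite -ec; exact: he bc.
by rewrite -ea; exact: he ab.
Qed.
Arguments fib_conv p : clear implicits.

Lemma cC_ge0 p : 0 <= cC (fib p).
Proof.
rewrite (cC_eq (fib_conv p)) -(pullback_KC he (conv_pred1 p)).
apply: (alpha_ge0 hA); exact: encoded_pullback.
Qed.

Lemma alpha_pbKC p m :
  alpha (pullback (@KC F dP P _ (conv_pred1 p) m) he) = (m%:R)%:E * cC (fib p).
Proof.
elim: m => [|m IH].
  rewrite mul0e; apply: alpha_zero; first exact: encoded_pullback.
  by move=> q /=; case: ifP.
rewrite (alpha_ses hA _ _ _ (ses_pullback he (@ses_KC F _ _ _ (conv_pred1 p) m))); try exact: encoded_pullback.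
rewrite IH (pullback_KC he (conv_pred1 p) (hTe := fib_conv p)) -(cC_eq (fib_conv p)) -[(m.+1)%:R]natr1 EFinD addeC.
by rewrite ge0_muleDl ?lee_fin ?ler0n // mul1e.
Qed.

Definition downset (T : {set P}) : Prop :=
  forall p r, (p <= r)%O -> r \in T -> p \in T.

Lemma down_conv (T : {set P}) : downset T -> convexb (fun p => p \in T).
Proof. by move=> dT a b c ab bc _ cT; exact: dT bc cT. Qed.

Lemma alpha_pb_rest (N : pmod F P) (T : {set P}) (hT : convexb (fun p => p \in T)) :
  downset T ->
  alpha (pullback (rest N hT) he) = \sum_(p in T) ((pdim N p)%:R)%:E * cC (fib p).
Proof.
have [n] := ubnP #|T|; elim: n T hT => // n IH T hT lt dT.
case: (set_0Vmem T) => [T0 | [p0 p0T]].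
  subst T; rewrite big_set0; apply: alpha_zero; first exact: encoded_pullback.
  by move=> q /=; rewrite inE.
have [p pT pmax] := exists_max p0T.
pose T' := T :\ p.
have dT' : downset T'.
  move=> a b ab; rewrite !inE => /andP[bp bT]; rewrite (dT _ _ ab bT) andbT.
  apply/negP => /eqP ap; subst a.
  by move: bp; rewrite (pmax _ bT ab) eqxx.
set m := pdim N p.
have phiinv : forall r, r == p -> row_free (pid_mx m : 'M[F]_(m, pdim N r)) &&
                                 row_full (pid_mx m : 'M[F]_(m, pdim N r)).
  move=> r /eqP ->; rewrite pid_mx_1; exact: unit_free_full.
have phinat : forall a b (hab : (a <= b)%O), a == p -> b == p ->
    pmap (Kconst F P m) hab *m (pid_mx m : 'M[F]_(m, pdim N b)) =
    (pid_mx m : 'M[F]_(m, pdim N a)) *m pmap N hab.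
  move=> a b hab /eqP ea /eqP eb; subst a b.
  by rewrite /= /kc_map (pmap_id N) pid_mx_1 mul1mx.
have H1 : forall r, r == p -> r \in T by move=> r /eqP ->.
have H2 : forall r, r \in T' -> r \in T by move=> r; rewrite /T' inE => /andP[].
have H3 : forall r, r \in T -> (r == p) = ~~ (r \in T').
  by move=> r rT; rewrite /T' !inE rT andbT negbK.
have H4 : forall a b, (a <= b)%O -> a == p -> b \in T -> b == p.
  by move=> a b ab /eqP ea bT; subst a; rewrite (pmax _ bT ab).
have H5 : forall a b, (a <= b)%O -> a \in T -> b \in T' -> a \in T'.
  by move=> a b ab aT bT'; exact: dT' ab bT'.
have S := @ses_rest F dP P (Kconst F P m) N (fun r => r == p) (fun r => r \in T)
  (fun r => r \in T') (conv_pred1 p) hT (down_conv dT')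
  (fun r => pid_mx m) H1 H2 H3 H4 H5 phiinv phinat.
have S' := ses_pullback he S.
rewrite (alpha_ses hA _ _ _ S'); try exact: encoded_pullback.
rewrite (alpha_pbKC p m) (IH T' (down_conv dT')) //; last first.
  by move: lt; rewrite (cardsD1 p T) pT.
rewrite [in RHS](bigD1 p) //=; congr (_ + _); apply: eq_bigl => r.
by rewrite /T' !inE andbC.
Qed.

Lemma alpha_formula (M : pmod F Q) (M' : pmod F P) : encoded X M ->
  pm_iso M (pullback M' he) ->
  alpha M = \sum_p ((pdim M' p)%:R)%:E * cC (fib p).
Proof.
move=> eM iso; rewrite (alpha_iso hA eM _ iso); last exact: encoded_pullback.
have hTr : convexb (fun _ : P => true) by [].
have dT : downset [set: P] by move=> *; rewrite inE.
have E : rest M' (down_conv dT) = M'.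
  rewrite (@rest_ext _ _ _ M' _ (fun _ => true) (down_conv dT) hTr); first exact: rest_predT.
  by move=> p; rewrite inE.
rewrite -{1}E (alpha_pb_rest M' (down_conv dT) dT); apply: eq_bigl => r; by rewrite inE.
Qed.

End CL.

End Part1.
Import Part1.

Module Part2.
Local Open Scope classical_set_scope.

Section Alg.
Variable T : Type.

Lemma gen_is_algebra (G : set (set T)) : is_algebra (gen_algebra G).
Proof.
split.
- by move=> Y [].
- by move=> A hA Y hY GY; have [_ hc _] := hY; apply: hc; exact: hA.
- by move=> A B hA hB Y hY GY; have [_ _ hu] := hY; apply: hu; [exact: hA|exact: hB].
Qed.

Lemma gen_sub (G : set (set T)) : G `<=` gen_algebra G.
Proof. by move=> A GA Y _ GY; exact: GY. Qed.

Lemma gen_min (G Y : set (set T)) : is_algebra Y -> G `<=` Y -> gen_algebra G `<=` Y.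
Proof. by move=> hY GY A hA; exact: hA. Qed.

Variable Y : set (set T).
Hypothesis hY : is_algebra Y.

Lemma alg0 : Y set0. Proof. by case: hY. Qed.
Lemma algC A : Y A -> Y (~` A). Proof. by case: hY => _ h _; exact: h. Qed.
Lemma algU A B : Y A -> Y B -> Y (A `|` B). Proof. by case: hY => _ _ h; exact: h. Qed.
Lemma algT : Y setT. Proof. by rewrite -setC0; apply: algC; exact: alg0. Qed.
Lemma algI A B : Y A -> Y B -> Y (A `&` B).
Proof.
move=> hA hB; rewrite -[A `&` B]setCK setCI; apply: algC; apply: algU; exact: algC.
Qed.
Lemma algD A B : Y A -> Y B -> Y (A `\` B).
Proof. by move=> hA hB; rewrite setDE; apply: algI => //; exact: algC. Qed.

Lemma alg_bigU (I : Type) (s : seq I) (P : pred I) (B : I -> set T) :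
  (forall i, P i -> Y (B i)) -> Y (\big[setU/set0]_(i <- s | P i) B i).
Proof.
move=> hB; elim: s => [|i s IH]; first by rewrite big_nil; exact: alg0.
rewrite big_cons; case: ifP => // Pi; apply: algU => //; exact: hB.
Qed.

End Alg.

Lemma in_bigU (T : Type) (I : eqType) (s : seq I) (P : pred I) (B : I -> set T) q :
  (\big[setU/set0]_(i <- s | P i) B i) q <-> exists i, [/\ i \in s, P i & B i q].
Proof.
elim: s => [|i s IH]; first by rewrite big_nil; split => // [[i []]].
rewrite big_cons; case: ifP => Pi; split.
- case => [Bi|/IH [j [js Pj Bj]]]; first by exists i; split => //; rewrite inE eqxx.
  by exists j; split => //; rewrite inE js orbT.
- move=> [j []]; rewrite inE => /orP [/eqP ->|js] Pj Bj; first by left.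
  by right; apply/IH; exists j.
- by move/IH => [j [js Pj Bj]]; exists j; split => //; rewrite inE js orbT.
- move=> [j []]; rewrite inE => /orP [/eqP ji|js] Pj Bj; first by subst j; rewrite Pi in Pj.
  by apply/IH; exists j.
Qed.

Section Content.
Variables (T : Type) (R : realType) (A0 : set (set T)) (nu : set T -> \bar R).
Hypotheses (hA0 : is_algebra A0) (hnu : content A0 nu).
Local Open Scope ereal_scope.

Lemma nu0 : nu set0 = 0. Proof. by case: hnu. Qed.
Lemma nu_ge0 A : A0 A -> 0 <= nu A. Proof. by case: hnu => _ h _; exact: h. Qed.
Lemma nuU A B : A0 A -> A0 B -> A `&` B = set0 -> nu (A `|` B) = nu A + nu B.
Proof. by case: hnu => _ _ h; exact: h. Qed.

Lemma content_bigU (I : eqType) (s : seq I) (P : pred I) (B : I -> set T) :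
  uniq s -> (forall i, P i -> A0 (B i)) ->
  (forall i j, P i -> P j -> i != j -> B i `&` B j = set0) ->
  nu (\big[setU/set0]_(i <- s | P i) B i) = \sum_(i <- s | P i) nu (B i).
Proof.
move=> + hB hdis; elim: s => [|i s IH]; first by rewrite !big_nil nu0.
rewrite cons_uniq => /andP[nis us]; rewrite !big_cons; case: ifP => Pi; last exact: IH.
rewrite nuU ?IH //; first exact: hB.
- by apply: alg_bigU.
- apply/seteqP; split => // q [Biq /in_bigU [j [js Pj Bjq]]].
  have ij : i != j by apply/eqP => ij; subst j; rewrite js in nis.
  by rewrite -(hdis i j Pi Pj ij); split.
Qed.

End Content.

Section Part.
Variables (T : Type) (R : realType) (A0 : set (set T)) (nu : set T -> \bar R).
Hypotheses (hA0 : is_algebra A0) (hnu : content A0 nu).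
Local Open Scope ereal_scope.

Lemma nat_integral_part (I : finType) (B : I -> set T) (v : I -> nat) (f : T -> nat) :
  (forall i, A0 (B i)) -> (forall i j, i != j -> B i `&` B j = set0) ->
  (forall q, exists i, B i q) -> (forall i q, B i q -> f q = v i) ->
  nat_integral nu f = \sum_i ((v i)%:R)%:E * nu (B i).
Proof.
move=> hB hdis hcov hval; rewrite /nat_integral /hbound.
case: pselect => [h|nh]; last first.
  exfalso; apply: nh; exists (\max_i v i).+1 => q.
  have [i Bi] := hcov q; rewrite (hval _ _ Bi) ltnS.
  exact: (@leq_bigmax _ (fun i => v i)).
case: (cid h) => N HN /=.
have pre : forall n : nat, f @^-1` [set n] =
    \big[setU/set0]_(i <- index_enum I | v i == n) B i.
  move=> n; apply/seteqP; split => q.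
    move=> /= fq; have [i Bi] := hcov q; apply/in_bigU; exists i; split.
    - exact: mem_index_enum.
    - by rewrite -(hval _ _ Bi) fq.
    - exact: Bi.
  move=> /in_bigU [i [_ /eqP <- Bi]] /=; exact: hval.
have g0 : forall i, 0 <= ((v i)%:R)%:E * nu (B i).
  by move=> i; rewrite mule_ge0 ?lee_fin ?ler0n //; apply: (nu_ge0 hnu); exact: hB.
transitivity (\sum_(n < N) \sum_(i | v i == n) ((v i)%:R)%:E * nu (B i)).
  apply: eq_bigr => n _; rewrite pre (content_bigU hA0 hnu) //; last first.
  - by move=> i j _ _; exact: hdis.
  - exact: index_enum_uniq.
  rewrite ge0_sume_distrr; last by move=> i _; apply: (nu_ge0 hnu); exact: hB.
  by apply: eq_bigr => i /eqP ->.
rewrite (exchange_big_dep xpredT) //=; apply: eq_bigr => i _.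
case: (ltnP (v i) N) => [lt|ge].
  have H1 : (fun n : 'I_N => v i == n) =1 pred1 (Ordinal lt).
    by move=> n /=; apply/eqP/eqP => [vn|-> //]; apply: val_inj => /=; rewrite vn.
  by rewrite (big_pred1 _ H1).
rewrite big_pred0; last first.
  move=> n; apply/negbTE/eqP => vn; move: (ltn_ord n); rewrite -vn ltnNge ge.
  by [].
suff -> : B i = set0 by rewrite (nu0 hnu) mule0.
apply/seteqP; split => // q Bi; have := HN q; rewrite (hval _ _ Bi) ltnNge ge.
by [].
Qed.

End Part.

End Part2.
Import Part2.

Module Part3.
Local Open Scope classical_set_scope.

Section Reps.
Variables (dQ : Order.disp_t) (Q : porderType dQ) (X : set (set Q)).
Hypothesis hX : is_algebra X.

Definition XUp := gen_algebra (fun U : set Q => is_upset U /\ X U).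

Record rep := Rep {
  rd : Order.disp_t;
  rP : finPOrderType rd;
  re : Q -> rP;
  rhe : {homo re : x y / (x <= y)%O};
  rX : forall p, X (re @^-1` [set p]) }.

Lemma fiber_bigU (r : rep) (T : pred (rP r)) :
  [set q | T (re r q)] = \big[setU/set0]_(t <- index_enum (rP r) | T t) (re r @^-1` [set t]).
Proof.
apply/seteqP; split => q /=.
  by move=> Tq; apply/in_bigU; exists (re r q); split => //; exact: mem_index_enum.
by move=> /in_bigU [t [_ Tt /= ->]].
Qed.

Lemma rep_X (r : rep) (T : pred (rP r)) : X [set q | T (re r q)].
Proof. by rewrite fiber_bigU; apply: alg_bigU => // t _; exact: rX. Qed.

Lemma fiber_XUp (r : rep) p : XUp (re r @^-1` [set p]).
Proof.
have -> : re r @^-1` [set p] =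
   [set q | (p <= re r q)%O] `\` [set q | (p < re r q)%O].
  apply/seteqP; split => q /=.
    by move=> ->; rewrite lexx ltxx.
  by move=> [pq /negP]; rewrite lt_def pq andbT negbK => /eqP ->.
apply: (algD (gen_is_algebra _)).
  apply: gen_sub; split; last exact: (rep_X (fun t => (p <= t)%O)).
  by move=> u v /= pu uv; apply: le_trans pu (rhe r uv).
apply: (gen_sub (G := fun U : set Q => is_upset U /\ X U)); split; last exact: (rep_X (fun t => (p < t)%O)).
by move=> u v /= pu uv; apply: lt_le_trans pu (rhe r uv).
Qed.

Lemma rep_XUp (r : rep) (T : pred (rP r)) : XUp [set q | T (re r q)].
Proof.
rewrite fiber_bigU; apply: (alg_bigU (gen_is_algebra _)) => t _.
exact: fiber_XUp.
Qed.

Definition Dset (A : set Q) := exists (r : rep) (T : pred (rP r)), A = [set q | T (re r q)].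

Definition bool_rep (U : set Q) (hU : is_upset U) (hXU : X U) : rep.
Proof.
refine (@Rep _ bool (fun q => `[< U q >]) _ _).
- move=> a b ab; case: (asboolP (U a)) => Ua; last by case: (`[< U b >]).
  by rewrite asboolT //; exact: hU Ua ab.
- case.
    suff -> : (fun q => `[< U q >]) @^-1` [set true] = U by [].
    by apply/seteqP; split => q /=; [move/asboolP|move/asboolP].
  suff -> : (fun q => `[< U q >]) @^-1` [set false] = ~` U by exact: algC.
  apply/seteqP; split => q /=; first by move=> h Uq; move: h; rewrite asboolT.
  by move=> nU; apply: asboolF.
Defined.

Definition prod_rep (r1 r2 : rep) : rep.
Proof.
refine (@Rep _ (rP r1 *p rP r2) (fun q => (re r1 q, re r2 q)) _ _).
- by move=> a b ab; rewrite le_pair !rhe.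
- case=> t1 t2.
  have -> : (fun q => ((re r1 q, re r2 q) : rP r1 *p rP r2)) @^-1` [set (t1, t2)] =
    (re r1 @^-1` [set t1]) `&` (re r2 @^-1` [set t2]).
    by apply/seteqP; split => q /=; [case=> -> ->|case=> -> ->].
  by apply: algI => //; exact: rX.
Defined.

Lemma Dset_alg : is_algebra Dset.
Proof.
have U0 : is_upset (@setT Q) by [].
have r0 := bool_rep U0 (algT hX).
split.
- exists r0, pred0; by apply/seteqP; split.
- move=> A [r [T ->]]; exists r, (fun t => ~~ T t).
  by apply/seteqP; split => q /=; [move/negP|move/negP].
- move=> A B [r1 [T1 ->]] [r2 [T2 ->]]; exists (prod_rep r1 r2), (fun t => T1 t.1 || T2 t.2).
  by apply/seteqP; split => q /=; [case=> ->; rewrite ?orbT|case/orP; [left|right]].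
Qed.

Lemma XUp_Dset A : XUp A -> Dset A.
Proof.
apply: gen_min; first exact: Dset_alg.
move=> U [hU hXU]; exists (bool_rep hU hXU), id.
by apply/seteqP; split => q /=; [move=> Uq; apply/asboolP|move/asboolP].
Qed.

End Reps.

End Part3.
Import Part3.

Module Part4.
Local Open Scope classical_set_scope.
Local Notation pmap := Defs.pmap.

Section Main.
Variables (F : fieldType) (dQ : Order.disp_t) (Q : porderType dQ) (R : realType).
Variables (X : set (set Q)) (hX : is_algebra X).
Local Open Scope ereal_scope.

Lemma encoded_rep (M : pmod F Q) : encoded X M ->
  exists (r : rep X) (M' : pmod F (rP r)), pm_iso M (pullback M' (@rhe _ _ _ r)).
Proof.
move=> [dP [P [e [he [M' [hXe iso]]]]]].
by exists (Rep he hXe), M'.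
Qed.

Lemma iso_pdim (M : pmod F Q) (r : rep X) (M' : pmod F (rP r)) :
  pm_iso M (pullback M' (@rhe _ _ _ r)) -> forall q, pdim M q = pdim M' (re r q).
Proof.
move=> [f [g [_ _ h]]] q; have [h1 h2] := h q; exact: inv_dim h1 h2.
Qed.

Lemma fib_disj (r : rep X) (s t : rP r) : s != t ->
  (re r @^-1` [set s]) `&` (re r @^-1` [set t]) = set0.
Proof.
move=> st; apply/seteqP; split => // q [/= a b].
by move: st; rewrite -a -b eqxx.
Qed.

Lemma Phi_formula (nu : set Q -> \bar R) (hnu : content (XUp X) nu)
  (M : pmod F Q) (r : rep X) (M' : pmod F (rP r)) :
  pm_iso M (pullback M' (@rhe _ _ _ r)) ->
  nat_integral nu (pdim M) = \sum_p ((pdim M' p)%:R)%:E * nu (re r @^-1` [set p]).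
Proof.
move=> iso; apply: (nat_integral_part (gen_is_algebra _) hnu).
- move=> p; exact: fiber_XUp.
- exact: fib_disj.
- by move=> q; exists (re r q).
- by move=> p q /= <-; exact: iso_pdim.
Qed.

Lemma ses_pdim (A B C : pmod F Q) f g : @ses F dQ Q A B C f g ->
  forall q, pdim B q = (pdim A q + pdim C q)%N.
Proof.
move=> [_ _ ex] q; have /and4P[fr gf E1 E2] := ex q.
have E : (f q == kermx (g q))%MS by rewrite E1 E2.
have := mxrank_ker (g q); rewrite -(eqmx_rank E) (eqP fr) (eqP gf) => ->.
by rewrite subnK // -(eqP gf) rank_leq_row.
Qed.

Lemma forward (nu : set Q -> \bar R) : content (XUp X) nu ->
  additive_amplitude (encoded X) (fun M : pmod F Q => nat_integral nu (pdim M)).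
Proof.
move=> hnu.
have ge0 : forall M : pmod F Q, encoded X M -> 0 <= nat_integral nu (pdim M).
  move=> M /encoded_rep [r [M' iso]]; rewrite (Phi_formula hnu iso).
  apply: sume_ge0 => p _; rewrite mule_ge0 ?lee_fin ?ler0n //.
  apply: (nu_ge0 hnu); exact: fiber_XUp.
have add : forall (A B C : pmod F Q) f g, encoded X A -> encoded X B -> encoded X C ->
    @ses F dQ Q A B C f g ->
    nat_integral nu (pdim B) = nat_integral nu (pdim A) + nat_integral nu (pdim C).
  move=> A B C f g /encoded_rep [rA [A' isoA]] /encoded_rep [rB [B' isoB]]
    /encoded_rep [rC [C' isoC]] S.
  pose I := (rP rA * rP rB * rP rC)%type.
  pose Bs (t : I) := (re rA @^-1` [set t.1.1]) `&` (re rB @^-1` [set t.1.2])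
                     `&` (re rC @^-1` [set t.2]).
  have hB : forall t, XUp X (Bs t).
    move=> t; apply: (algI (gen_is_algebra _)); last exact: fiber_XUp.
    apply: (algI (gen_is_algebra _)); exact: fiber_XUp.
  have hd : forall s t, s != t -> Bs s `&` Bs t = set0.
    move=> [[s1 s2] s3] [[t1 t2] t3] st; apply/seteqP; split => // q.
    move=> [[[a1 a2] a3] [[b1 b2] b3]]; rewrite /= in a1 a2 a3 b1 b2 b3; move: st.
    by rewrite -a1 -a2 -a3 -b1 -b2 -b3 eqxx.
  have hc : forall q, exists t, Bs t q.
    by move=> q; exists (re rA q, re rB q, re rC q).
  have iA := iso_pdim isoA; have iB := iso_pdim isoB; have iC := iso_pdim isoC.
  rewrite (nat_integral_part (gen_is_algebra _) hnu (f := pdim A) (v := fun t => pdim A' t.1.1) hB hd hc);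
    last by move=> t q [[a _] _]; rewrite /= in a; rewrite -a; exact: iA.
  rewrite (nat_integral_part (gen_is_algebra _) hnu (f := pdim C) (v := fun t => pdim C' t.2) hB hd hc);
    last by move=> t q [_ c]; rewrite /= in c; rewrite -c; exact: iC.
  rewrite (nat_integral_part (gen_is_algebra _) hnu
     (f := pdim B) (v := fun t => (pdim A' t.1.1 + pdim C' t.2)%N) hB hd hc); last first.
    by move=> t q [[a _] c]; rewrite /= in a c; rewrite (ses_pdim S) iA iC a c.
  rewrite -big_split /=; apply: eq_bigr => t _.
  rewrite natrD EFinD ge0_muleDl ?lee_fin ?ler0n //.
split; last exact: add.
split.
- exact: ge0.
- move=> Z eZ Z0.
  rewrite (nat_integral_part (gen_is_algebra _) hnu (I := unit) (B := fun _ => setT)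
    (v := fun _ => 0%N)) //.
  + by rewrite big1 // => i _; rewrite mul0e.
  + by move=> _; exact: (@algT _ (XUp X) (gen_is_algebra _)).
- move=> A B C f g eA eB eC S; rewrite (add A B C f g) //; split.
  + by apply: leeDl; exact: ge0.
  + by apply: leeDr; exact: ge0.
  + by [].
Qed.

Lemma fib_Phi (nu : set Q -> \bar R) (hnu : content (XUp X) nu) (r : rep X) (t : rP r) :
  nu (re r @^-1` [set t]) =
  nat_integral nu (pdim (pullback (KC F (conv_pred1 t) 1) (@rhe _ _ _ r))).
Proof.
rewrite (nat_integral_part (gen_is_algebra _) hnu (I := bool)
  (B := fun b => if b then re r @^-1` [set t] else ~` (re r @^-1` [set t]))
  (v := nat_of_bool)).
- by rewrite big_bool /= mul0e adde0 mul1e.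
- case; first exact: fiber_XUp.
  by apply: (algC (gen_is_algebra _)); exact: fiber_XUp.
- case; case => //= _; apply/seteqP; split => // q []; by [].
- move=> q; case: (pselect (re r q = t)) => h; first by exists true.
  by exists false.
- case => q /=; first by move=> ->; rewrite eqxx.
  by move=> h; case: eqP.
Qed.

Lemma injective (nu1 nu2 : set Q -> \bar R) : content (XUp X) nu1 -> content (XUp X) nu2 ->
  (forall M : pmod F Q, encoded X M -> nat_integral nu1 (pdim M) = nat_integral nu2 (pdim M)) ->
  forall A, XUp X A -> nu1 A = nu2 A.
Proof.
move=> h1 h2 hPhi A /(XUp_Dset hX) [r [T ->]].
rewrite fiber_bigU.
have E : forall nu : set Q -> \bar R, content (XUp X) nu ->
    nu (\big[setU/set0]_(t <- index_enum (rP r) | T t) (re r @^-1` [set t])) =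
    \sum_(t <- index_enum (rP r) | T t) nu (re r @^-1` [set t]).
  move=> nu hnu; rewrite (content_bigU (gen_is_algebra _) hnu) //.
  - exact: index_enum_uniq.
  - move=> t _; exact: fiber_XUp.
  - by move=> s t _ _; exact: fib_disj.
rewrite !E //; apply: eq_bigr => t _.
rewrite (fib_Phi h1) (fib_Phi h2); apply: hPhi.
exact: encoded_pullback (@rX _ _ _ r).
Qed.

Section Surj.
Variable (alpha : pmod F Q -> \bar R).
Hypothesis hA : additive_amplitude (encoded X) alpha.

Definition repsum (r : rep X) (T : pred (rP r)) : \bar R :=
  \sum_(t | T t) cC alpha (fib (re r) t).

Lemma cC_pb (r : rep X) (t : rP r) :
  cC alpha (fib (re r) t) = alpha (pullback (KC F (conv_pred1 t) 1) (@rhe _ _ _ r)).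
Proof. by rewrite (alpha_pbKC hA (@rhe _ _ _ r) (@rX _ _ _ r) t 1) mul1e. Qed.

Lemma cC_empty (r : rep X) (t : rP r) : (forall q, re r q != t) ->
  cC alpha (fib (re r) t) = 0.
Proof.
move=> h; rewrite cC_pb; apply: (alpha_zero hA).
  exact: encoded_pullback (@rX _ _ _ r).
by move=> q /=; rewrite (negbTE (h q)).
Qed.

Lemma repsum_refine (r r' : rep X) (pi : rP r' -> rP r)
  (hpi : {homo pi : x y / (x <= y)%O}) (hre : forall q, re r q = pi (re r' q))
  (T : pred (rP r)) :
  repsum T = \sum_(t' | T (pi t')) cC alpha (fib (re r') t').
Proof.
have step : forall p, cC alpha (fib (re r) p) =
    \sum_(t' | pi t' == p) cC alpha (fib (re r') t').
  move=> p; have hc := fib_conv (p := p) hpi.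
  rewrite (cC_eq alpha (fib_conv (p := p) (@rhe _ _ _ r))).
  have -> : KC F (fib_conv (p := p) (@rhe _ _ _ r)) 1 =
            pullback (KC F hc 1) (@rhe _ _ _ r').
    have hpe : {homo (fun q => pi (re r' q)) : x y / (x <= y)%O}.
      by move=> x y xy; apply: hpi; exact: (@rhe _ _ _ r').
    rewrite (pullback_KC (@rhe _ _ _ r') hc (hTe := fib_conv (p := p) hpe)).
    by apply: rest_ext => q; rewrite /fib hre.
  rewrite (alpha_formula hA (he := @rhe _ _ _ r') (@rX _ _ _ r') (M := pullback (KC F hc 1) (@rhe _ _ _ r')) (M' := KC F hc 1)); last exact: pm_iso_refl.
    rewrite [RHS]big_mkcond /=; apply: eq_bigr => t' _.
    by rewrite /fib; case: (pi t' == p); rewrite ?mulr1n ?mul1e ?mul0e.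
  exact: encoded_pullback (@rX _ _ _ r').
rewrite /repsum; under eq_bigr do rewrite step.
rewrite (partition_big pi T) //; apply: eq_bigr => p Tp.
by apply: eq_bigl => t'; case: (pi t' =P p) => [->|_]; rewrite ?Tp ?andbF.
Qed.

Lemma repsum_ind (r1 r2 : rep X) (T1 : pred (rP r1)) (T2 : pred (rP r2)) :
  [set q | T1 (re r1 q)] = [set q | T2 (re r2 q)] -> repsum T1 = repsum T2.
Proof.
move=> E; pose r12 := prod_rep hX r1 r2.
have h1 : {homo (fun t : rP r12 => t.1) : x y / (x <= y)%O}.
  by move=> [a1 a2] [b1 b2]; rewrite le_pair => /andP[].
have h2 : {homo (fun t : rP r12 => t.2) : x y / (x <= y)%O}.
  by move=> [a1 a2] [b1 b2]; rewrite le_pair => /andP[].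
rewrite (@repsum_refine r1 r12 (fun t => t.1) h1 (fun q => erefl)).
rewrite (@repsum_refine r2 r12 (fun t => t.2) h2 (fun q => erefl)).
rewrite big_mkcond [RHS]big_mkcond; apply: eq_bigr => t _.
case E1: (T1 t.1); case E2: (T2 t.2) => //.
  rewrite cC_empty // => q; apply/eqP => qt.
  have : [set q | T1 (re r1 q)] q by rewrite /= [re r1 q]/(re r12 q).1 qt.
  by rewrite E /= [re r2 q]/(re r12 q).2 qt E2.
rewrite cC_empty // => q; apply/eqP => qt.
have : [set q | T2 (re r2 q)] q by rewrite /= [re r2 q]/(re r12 q).2 qt.
by rewrite -E /= [re r1 q]/(re r12 q).1 qt E1.
Qed.

Definition nuS (A : set Q) : \bar R :=
  match pselect (Dset X A) with
  | left h => let r := proj1_sig (cid h) in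
              repsum (proj1_sig (cid (proj2_sig (cid h))))
  | right _ => 0 end.

Lemma nuS_rep (r : rep X) (T : pred (rP r)) A : A = [set q | T (re r q)] ->
  nuS A = repsum T.
Proof.
move=> EA; rewrite /nuS; case: pselect => [h|nh]; last first.
  by exfalso; apply: nh; exists r, T.
case: (cid h) => r0 h0 /=; case: (cid h0) => T0 E0 /=.
by apply: repsum_ind; rewrite -E0 -EA.
Qed.

Lemma repsum_ge0 (r : rep X) (T : pred (rP r)) : 0 <= repsum T.
Proof.
apply: sume_ge0 => t _; exact: (cC_ge0 hA (@rhe _ _ _ r) (@rX _ _ _ r)).
Qed.

Lemma nuS_content : content (XUp X) nuS.
Proof.
split.
- have U0 : is_upset (@setT Q) by [].
  rewrite (@nuS_rep (bool_rep hX U0 (algT hX)) pred0); last by apply/seteqP; split.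
  by rewrite /repsum big_pred0_eq.
- by move=> A /(XUp_Dset hX) [r [T ->]]; rewrite (nuS_rep (erefl _)); exact: repsum_ge0.
- move=> A B /(XUp_Dset hX) [r1 [T1 EA]] /(XUp_Dset hX) [r2 [T2 EB]] AB.
  pose r12 := prod_rep hX r1 r2.
  rewrite (@nuS_rep r12 (fun t => T1 t.1) A) // (@nuS_rep r12 (fun t => T2 t.2) B) //.
  rewrite (@nuS_rep r12 (fun t => T1 t.1 || T2 t.2)); last first.
    rewrite EA EB; apply/seteqP; split => q /=.
      by case=> ->; rewrite ?orbT.
    by case/orP; [left|right].
  rewrite /repsum big_mkcond [X in _ = X + _]big_mkcond [X in _ = _ + X]big_mkcond.
  rewrite -big_split /=; apply: eq_bigr => t _.
  case E1: (T1 t.1); case E2: (T2 t.2); rewrite /= ?adde0 ?add0e //.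
  rewrite (@cC_empty r12 t) ?adde0 // => q; apply/eqP => qt.
  have : (A `&` B) q.
    rewrite EA EB /=; split; [have -> : re r1 q = t.1 by rewrite -qt | have -> : re r2 q = t.2 by rewrite -qt]; by [].
  by rewrite AB.
Qed.

Lemma surjective (M : pmod F Q) : encoded X M -> alpha M = nat_integral nuS (pdim M).
Proof.
move=> eM; have [r [M' iso]] := encoded_rep eM.
rewrite (alpha_formula hA (@rX _ _ _ r) eM iso) (Phi_formula nuS_content iso).
apply: eq_bigr => p _; congr (_ * _).
rewrite (@nuS_rep r (pred1 p)); first by rewrite /repsum big_pred1_eq.
by apply/seteqP; split => q /=; [move=> ->|move/eqP].
Qed.

End Surj.

End Main.

End Part4.
Import Part4.

Unset Implicit Arguments.
Set Strict Implicit.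

Local Open Scope classical_set_scope.
Local Open Scope ereal_scope.

Theorem mainTheorem1 (F : fieldType) (dQ : Order.disp_t) (Q : porderType dQ)
    (R : realType) (X : set (set Q)) :
  is_algebra X -> abelian_sub F X ->
  let XUp := gen_algebra (fun U : set Q => is_upset U /\ X U) in
  let Phi := fun (nu : set Q -> \bar R) (M : pmod F Q) => nat_integral nu (pdim M) in
  (* Phi maps contents on XUp to additive amplitudes on Vect^Q_X *)
  (forall nu, content XUp nu -> additive_amplitude (encoded X) (Phi nu))
  (* injective *)
  /\ (forall nu1 nu2, content XUp nu1 -> content XUp nu2 ->
        (forall M, encoded X M -> Phi nu1 M = Phi nu2 M) ->
        forall A, XUp A -> nu1 A = nu2 A)
  (* surjective *)
  /\ (forall alpha : pmod F Q -> \bar R, additive_amplitude (encoded X) alpha ->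
        exists nu, content XUp nu /\ forall M, encoded X M -> alpha M = Phi nu M).
Proof.
move=> hX _ XUp Phi; split; [|split].
- by move=> nu hnu; exact: (@forward F dQ Q R X hX nu hnu).
- by move=> nu1 nu2 h1 h2 hP A hA; exact: (injective hX h1 h2 hP hA).
- move=> alpha hA; exists (@nuS F dQ Q R X alpha); split.
    exact: (nuS_content hX hA).
  by move=> M eM; exact: (surjective hX hA eM).
Qed.
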